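(* Assume $a_1\ge5$ and $a_2=1$. Let $\mu=k\Lambda_1-l\Lambda_2\in P$ with $k,l\in\mathbb Z$, and let $\{p^\mu_m\}_{m\in\mathbb Z}$ be defined by $p^\mu_0=l$, $p^\mu_1=k$, $p^\mu_{m+2}=a_2p^\mu_{m+1}-p^\mu_m$ ($m\ge0$ even), $p^\mu_{m+2}=a_1p^\mu_{m+1}-p^\mu_m$ ($m\ge0$ odd), and for $m<0$: $p^\mu_m=a_2p^\mu_{m+1}-p^\mu_{m+2}$ ($m$ even), $p^\mu_m=a_1p^\mu_{m+1}-p^\mu_{m+2}$ ($m$ odd). (1) If there exists $n\in\mathbb Z$ with $0<p^\mu_{2n}\le p^\mu_{2n+2}$, then $0<p^\mu_{2m}\le p^\mu_{2m+2}$ for all $m\ge n$. (2) If there exists $n\in\mathbb Z$ with $0<p^\mu_{2n}\le p^\mu_{2n-2}$, then $0<p^\mu_{2m}\le p^\mu_{2m-2}$ for all $m\le n$.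
   Context: $a_1,a_2$ are positive integers (here $a_2=1$, $a_1\ge5$), and $P=\mathbb Z\Lambda_1\oplus\mathbb Z\Lambda_2$ is the weight lattice of the Kac–Moody algebra with generalized Cartan matrix $\begin{pmatrix}2&-a_1\\-a_2&2\end{pmatrix}$, with fundamental weights $\Lambda_1,\Lambda_2$. *)

(* Defs.v *)
From Stdlib Require Import ZArith.
Open Scope Z_scope.

Definition pcoef (a1 a2 m : Z) : Z := if Z.even m then a2 else a1.

(* Forward iteration: pfw n = (p_n, p_(n+1)) for n >= 0,
   using p_(m+2) = pcoef m * p_(m+1) - p_m. *)
Fixpoint pfw (a1 a2 k l : Z) (n : nat) : Z * Z :=
  match n with
  | O => (l, k)
  | S n' => let (x, y) := pfw a1 a2 k l n' in
            (y, pcoef a1 a2 (Z.of_nat n') * y - x)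
  end.

(* Backward iteration: pbw n = (p_(-n), p_(-n+1)),
   using p_m = pcoef m * p_(m+1) - p_(m+2) for m < 0. *)
Fixpoint pbw (a1 a2 k l : Z) (n : nat) : Z * Z :=
  match n with
  | O => (l, k)
  | S n' => let (x, y) := pbw a1 a2 k l n' in
            (pcoef a1 a2 (- Z.of_nat n' - 1) * x - y, x)
  end.

Definition pmu (a1 a2 k l m : Z) : Z :=
  if 0 <=? m then fst (pfw a1 a2 k l (Z.to_nat m))
  else fst (pbw a1 a2 k l (Z.to_nat (- m))).

(* Main.v *)
Require Import Defs.
From Stdlib Require Import ZArith Lia.
Open Scope Z_scope.

Lemma pmu_pos a1 a2 k l (n : nat) : pmu a1 a2 k l (Z.of_nat n) = fst (pfw a1 a2 k l n).
Proof. unfold pmu. rewrite Nat2Z.id. rewrite (proj2 (Z.leb_le _ _)) by lia. reflexivity. Qed.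

Lemma pmu_neg a1 a2 k l (n : nat) : pmu a1 a2 k l (- Z.of_nat n) = fst (pbw a1 a2 k l n).
Proof.
  unfold pmu. destruct n as [|n]; [reflexivity|].
  rewrite (proj2 (Z.leb_gt _ _)) by lia.
  rewrite Z.opp_involutive, Nat2Z.id. reflexivity.
Qed.

Lemma pfw_S a1 a2 k l n : pfw a1 a2 k l (S n) =
  (snd (pfw a1 a2 k l n), pcoef a1 a2 (Z.of_nat n) * snd (pfw a1 a2 k l n) - fst (pfw a1 a2 k l n)).
Proof. simpl. destruct (pfw a1 a2 k l n); reflexivity. Qed.

Lemma pbw_S a1 a2 k l n : pbw a1 a2 k l (S n) =
  (pcoef a1 a2 (- Z.of_nat n - 1) * fst (pbw a1 a2 k l n) - snd (pbw a1 a2 k l n), fst (pbw a1 a2 k l n)).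
Proof. simpl. destruct (pbw a1 a2 k l n); reflexivity. Qed.

Lemma rec a1 a2 k l m :
  pmu a1 a2 k l (m + 2) = pcoef a1 a2 m * pmu a1 a2 k l (m + 1) - pmu a1 a2 k l m.
Proof.
  destruct (Z_le_gt_dec 0 m) as [H|H].
  - destruct (Z_of_nat_complete _ H) as [n ->].
    replace (Z.of_nat n + 2) with (Z.of_nat (S (S n))) by lia.
    replace (Z.of_nat n + 1) with (Z.of_nat (S n)) by lia.
    rewrite !pmu_pos, !pfw_S. simpl. reflexivity.
  - destruct (Z.eq_dec m (-1)) as [->|Hm].
    + replace (-1) with (- Z.of_nat 1) by reflexivity.
      rewrite pmu_neg. change (- Z.of_nat 1 + 2) with (Z.of_nat 1).
      change (- Z.of_nat 1 + 1) with (Z.of_nat 0).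
      rewrite !pmu_pos. simpl. lia.
    + assert (0 <= - m - 2) as H2 by lia.
      destruct (Z_of_nat_complete _ H2) as [n Hn].
      replace m with (- Z.of_nat (S (S n))) by lia.
      replace (- Z.of_nat (S (S n)) + 2) with (- Z.of_nat n) by lia.
      replace (- Z.of_nat (S (S n)) + 1) with (- Z.of_nat (S n)) by lia.
      rewrite !pmu_neg, (pbw_S _ _ _ _ (S n)); cbn [fst snd].
      rewrite (pbw_S _ _ _ _ n); cbn [fst snd].
      replace (- Z.of_nat (S n) - 1) with (- Z.of_nat (S (S n))) by lia.
      lia.
Qed.

Lemma qrec a1 k l n :
  pmu a1 1 k l (2 * n + 2) = (a1 - 2) * pmu a1 1 k l (2 * n) - pmu a1 1 k l (2 * n - 2).
Proof.
  assert (E1 := rec a1 1 k l (2 * n)).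
  assert (E2 := rec a1 1 k l (2 * n - 1)).
  assert (E3 := rec a1 1 k l (2 * n - 2)).
  assert (e1 : Z.even (2 * n) = true) by (rewrite Z.even_mul; reflexivity).
  assert (e2 : Z.even (2 * n - 1) = false) by (rewrite Z.even_sub, Z.even_mul; reflexivity).
  assert (e3 : Z.even (2 * n - 2) = true) by (rewrite Z.even_sub, Z.even_mul; reflexivity).
  unfold pcoef in *. rewrite e1 in E1. rewrite e2 in E2. rewrite e3 in E3.
  cbv iota in E1, E2, E3.
  replace (2 * n - 1 + 2) with (2 * n + 1) in E2 by lia.
  replace (2 * n - 1 + 1) with (2 * n) in E2 by lia.
  replace (2 * n - 2 + 2) with (2 * n) in E3 by lia.
  replace (2 * n - 2 + 1) with (2 * n - 1) in E3 by lia.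
  nia.
Qed.

Theorem lemmaB1 (a1 a2 k l : Z) (ha1 : 5 <= a1) (ha2 : a2 = 1) :
  (forall n : Z,
     0 < pmu a1 a2 k l (2 * n) <= pmu a1 a2 k l (2 * n + 2) ->
     forall m : Z, n <= m ->
       0 < pmu a1 a2 k l (2 * m) <= pmu a1 a2 k l (2 * m + 2)) /\
  (forall n : Z,
     0 < pmu a1 a2 k l (2 * n) <= pmu a1 a2 k l (2 * n - 2) ->
     forall m : Z, m <= n ->
       0 < pmu a1 a2 k l (2 * m) <= pmu a1 a2 k l (2 * m - 2)).
Proof.
  subst a2. split.
  - intros n Hn m Hm.
    pattern m; apply Z.le_ind with (n := n); auto.
    + intros x y z; subst; reflexivity.
    + intros x _ [H1 H2].
      replace (2 * Z.succ x) with (2 * x + 2) by lia.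
      replace (2 * x + 2 + 2) with (2 * (x + 1) + 2) by lia.
      rewrite (qrec a1 k l (x + 1)).
      replace (2 * (x + 1)) with (2 * x + 2) by lia.
      replace (2 * x + 2 - 2) with (2 * x) by lia.
      nia.
  - intros n Hn m Hm.
    replace m with (n - (n - m)) by lia.
    assert (Hj : 0 <= n - m) by lia.
    generalize (n - m) Hj. clear m Hm Hj.
    intros j Hj. pattern j; apply Z.le_ind with (n := 0); auto.
    + intros x y z; subst; reflexivity.
    + rewrite Z.sub_0_r; exact Hn.
    + intros x _ [H1 H2].
      replace (2 * (n - Z.succ x)) with (2 * (n - x) - 2) by lia.
      replace (2 * (n - x) - 2 - 2) with (2 * (n - x - 1) - 2) by lia.
      assert (Q := qrec a1 k l (n - x - 1)).
      replace (2 * (n - x - 1) + 2) with (2 * (n - x)) in Q by lia.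
      replace (2 * (n - x - 1)) with (2 * (n - x) - 2) in Q by lia.
      replace (2 * (n - x - 1) - 2) with (2 * (n - x) - 2 - 2) by lia. nia.
Qed.
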